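(* Let $W$ be a finite set of possible worlds and let $\bullet$ be an operator assigning to every pair $(G_1,G_2)$ of belief algebras on $W$ a belief algebra $G_1\bullet G_2$ on $W$, and suppose $\bullet$ satisfies the postulates (RA1)–(RA6) described in the context. Then for any belief algebras $G_1,G_2$ on $W$, the revision result $G_1\bullet G_2$ is unique, and $$G_1\bullet G_2=\operatorname{Gen}\big((G_1\cup G_2)\cap (\operatorname{Com}(G_1)\bullet \operatorname{Com}(G_2))\big).$$
   Context: $W$ is a finite nonempty set (the possible worlds of a finite propositional language). Let $R_W=\{(U,V)\mid U,V\subseteq W,\ U\cap V=\varnothing\}$. A belief algebra on $W$ is a pair $(2^W,\gg)$, where $\gg$ is a binary relation on $2^W$ satisfying, for all $U,V,U_1,V_1,U_2,V_2\subseteq W$: (A0) $\gg\subseteq R_W$; (A1) $U\gg\varnothing$ iff $U\neq\varnothing$; (A2) if $U\gg V$ then not $V\gg U$; (A3) if $U_1\supseteq U$, $U\gg V$, $V\supseteq V_1$ and $U_1\cap V_1=\varnothing$, then $U_1\gg V_1$; (A4) if $U=U_1\cup V_1=U_2\cup V_2$, $U_1\gg V_1$ and $U_2\gg V_2$, then $U_1\cap U_2\gg V_1\cup V_2$. A belief algebra is identified with its relation $\gg$, viewed as a set of pairs; $(U,V)\in G$ means $U\gg V$, and $\subseteq,\cup,\cap$ between belief algebras refer to these sets of pairs. For $\Omega\subseteq R_W$, $\operatorname{Gen}(\Omega)$ is the smallest subset of $R_W$ containing $\Omega$ and closed under: (i) it contains $(U,\varnothing)$ for every nonempty $U\subseteq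 W$; (ii) if $(U,V)$ is in it, $U\subseteq U_1$, $V_1\subseteq V$, $U_1\cap V_1=\varnothing$, then $(U_1,V_1)$ is in it; (iii) if $U_1\cup V_1=U_2\cup V_2$ and $(U_1,V_1),(U_2,V_2)$ are in it, then $(U_1\cap U_2,V_1\cup V_2)$ is in it; when $\operatorname{Gen}(\Omega)$ satisfies (A2) it is regarded as a belief algebra. Total preorders: for a total preorder $\preceq$ on $W$, write $\omega\prec\omega'$ iff $\omega\preceq\omega'$ and not $\omega'\preceq\omega$. The relation defined by $U\gg V$ iff $U\cap V=\varnothing$ and there is $\omega_1\in U$ with $\omega_1\prec\omega_2$ for all $\omega_2\in V$ is a belief algebra; belief algebras arising this way are called complete belief algebras (CBAs). Backbone: every belief algebra $(2^W,\gg)$ has a unique backbone, a sequence $U_1,\dots,U_n$ of nonempty pairwise disjoint sets with union $W$, such that $U_i\gg U_{i+1}$ for all $i<n$ and, for each $i$, any two disjoint nonempty subsets $V_1,V_2$ of $U_i$ are incomparable under $\gg$. For nonempty $V\subseteq W$, the support $I(V)$ of $V$ (w.r.t. this backbone) is $U_i$ for the least index $i$ with $V\cap U_i\neq\varnothing$. $\operatorname{Com}(G)$ denotes the unique CBA that contains $G$ and has the same backbone as $G$ (explicitly, the CBA of the total preorder with $\omega\preceq\omega'$ iff the backbone block containing $\omega$ has index $\le$ that of the block containing $\omega'$). Write $G_1\leq G_2$ iff $G_1,G_2$ have the same backbone and $G_1\subseteq G_2$. Postulates for $\bullet$ (for all belief algebras $G_1=(2^W,\gg_1)$, $G_2=(2^W,\gg_2)$,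 $G_1',G_2'$): (RA1) $G_2\subseteq G_1\bullet G_2$. (RA2) There is $\Omega\subseteq G_1\cup G_2$ with $G_1\bullet G_2=\operatorname{Gen}(\Omega)$. (RA3) If $G_1,G_2$ are CBAs then $G_1\bullet G_2$ is a CBA. (RA4) If $G_1,G_2$ are CBAs and $\omega,\omega'\in W$ satisfy $I_2(\{\omega\})=I_2(\{\omega'\})$, where $I_2$ is the support w.r.t. the backbone of $G_2$, then $(\{\omega\},\{\omega'\})\in G_1\bullet G_2$ iff $\{\omega\}\gg_1\{\omega'\}$. (RA5) If $G_1\leq G_1'$ and $G_2\leq G_2'$ then $G_1\bullet G_2\subseteq G_1'\bullet G_2'$. (RA6) If $\Omega\subseteq G_1\cup G_2$, $\operatorname{Gen}(\Omega)\subseteq \operatorname{Com}(G_1)\bullet\operatorname{Com}(G_2)$ and $G_1\bullet G_2\subseteq\operatorname{Gen}(\Omega)$, then $G_1\bullet G_2=\operatorname{Gen}(\Omega)$. *)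

(* Defs.v *)
From mathcomp Require Import all_boot.
Set Implicit Arguments. Unset Strict Implicit. Unset Printing Implicit Defensive.

Section BeliefAlgebras.
Variable W : finType.

(* a binary relation on 2^W; (U,V) \in G is  G U V *)
Definition brel := {set W} -> {set W} -> Prop.

Definition brel_sub (G H : brel) : Prop := forall U V, G U V -> H U V.
Definition brel_eq (G H : brel) : Prop := forall U V, G U V <-> H U V.
Definition brel_union (G H : brel) : brel := fun U V => G U V \/ H U V.
Definition brel_inter (G H : brel) : brel := fun U V => G U V /\ H U V.

Definition RW : brel := fun U V => U :&: V = set0.

Definition belief_algebra (G : brel) : Prop :=
  [/\ (forall U V : {set W}, G U V -> U :&: V = set0),
      (forall U : {set W}, G U set0 <-> U != set0),
      (forall U V : {set W}, G U V -> ~ G V U),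
      (forall U V U1 V1 : {set W}, U \subset U1 -> G U V -> V1 \subset V ->
          U1 :&: V1 = set0 -> G U1 V1) &
      (forall U1 V1 U2 V2 : {set W}, U1 :|: V1 = U2 :|: V2 -> G U1 V1 -> G U2 V2 ->
          G (U1 :&: U2) (V1 :|: V2))].

Definition gen_closed (S : brel) : Prop :=
  [/\ (forall U : {set W}, U != set0 -> S U set0),
      (forall U V U1 V1 : {set W}, S U V -> U \subset U1 -> V1 \subset V ->
          U1 :&: V1 = set0 -> S U1 V1) &
      (forall U1 V1 U2 V2 : {set W}, U1 :|: V1 = U2 :|: V2 -> S U1 V1 -> S U2 V2 ->
          S (U1 :&: U2) (V1 :|: V2))].

Definition Gen (Omega : brel) : brel := fun U V =>
  forall S : brel, brel_sub S RW -> brel_sub Omega S -> gen_closed S -> S U V.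

Definition total_preorder (le : W -> W -> Prop) : Prop :=
  (forall x y, le x y \/ le y x) /\ (forall x y z, le x y -> le y z -> le x z).

Definition strict_of (le : W -> W -> Prop) (x y : W) : Prop := le x y /\ ~ le y x.

Definition ba_of_preorder (le : W -> W -> Prop) : brel := fun U V =>
  U :&: V = set0 /\ exists2 w1, w1 \in U & forall w2, w2 \in V -> strict_of le w1 w2.

Definition CBA (G : brel) : Prop :=
  exists le, total_preorder le /\ brel_eq G (ba_of_preorder le).

(* backbone U_1,...,U_n (as a sequence, 0-indexed) *)
Definition backbone (G : brel) (s : seq {set W}) : Prop :=
  [/\ (forall i, i < size s -> nth set0 s i != set0),
      (forall i j, i < size s -> j < size s -> i != j ->
          nth set0 s i :&: nth set0 s j = set0),
      \bigcup_(B <- s) B = setT,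
      (forall i, i.+1 < size s -> G (nth set0 s i) (nth set0 s i.+1)) &
      (forall i (V1 V2 : {set W}), i < size s -> V1 \subset nth set0 s i ->
          V2 \subset nth set0 s i -> V1 :&: V2 = set0 -> V1 != set0 ->
          V2 != set0 -> ~ G V1 V2 /\ ~ G V2 V1)].

Definition support (s : seq {set W}) (V : {set W}) : {set W} :=
  nth set0 s (find (fun B : {set W} => V :&: B != set0) s).

Definition block_index (s : seq {set W}) (w : W) : nat := find (fun B : {set W} => w \in B) s.

Definition backbone_preorder (s : seq {set W}) (w w' : W) : Prop :=
  block_index s w <= block_index s w'.

Definition Com (G : brel) : brel := fun U V =>
  exists2 s, backbone G s & ba_of_preorder (backbone_preorder s) U V.

Definition same_backbone (G1 G2 : brel) : Prop :=
  exists s, backbone G1 s /\ backbone G2 s.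

Definition ba_le (G1 G2 : brel) : Prop := same_backbone G1 G2 /\ brel_sub G1 G2.

Definition RA0 (op : brel -> brel -> brel) : Prop :=
  forall G1 G2, belief_algebra G1 -> belief_algebra G2 -> belief_algebra (op G1 G2).

Definition RA1 (op : brel -> brel -> brel) : Prop :=
  forall G1 G2, belief_algebra G1 -> belief_algebra G2 -> brel_sub G2 (op G1 G2).

Definition RA2 (op : brel -> brel -> brel) : Prop :=
  forall G1 G2, belief_algebra G1 -> belief_algebra G2 ->
    exists Omega, brel_sub Omega (brel_union G1 G2) /\ brel_eq (op G1 G2) (Gen Omega).

Definition RA3 (op : brel -> brel -> brel) : Prop :=
  forall G1 G2, CBA G1 -> CBA G2 -> CBA (op G1 G2).

Definition RA4 (op : brel -> brel -> brel) : Prop :=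
  forall G1 G2 s (w w' : W), CBA G1 -> CBA G2 -> backbone G2 s ->
    support s [set w] = support s [set w'] ->
    (op G1 G2 [set w] [set w'] <-> G1 [set w] [set w']).

Definition RA5 (op : brel -> brel -> brel) : Prop :=
  forall G1 G2 G1' G2', belief_algebra G1 -> belief_algebra G2 ->
    belief_algebra G1' -> belief_algebra G2' ->
    ba_le G1 G1' -> ba_le G2 G2' -> brel_sub (op G1 G2) (op G1' G2').

Definition RA6 (op : brel -> brel -> brel) : Prop :=
  forall G1 G2 Omega, belief_algebra G1 -> belief_algebra G2 ->
    brel_sub Omega (brel_union G1 G2) ->
    brel_sub (Gen Omega) (op (Com G1) (Com G2)) ->
    brel_sub (op G1 G2) (Gen Omega) ->
    brel_eq (op G1 G2) (Gen Omega).

End BeliefAlgebras.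

(* Main.v *)
Require Import Defs.
From mathcomp Require Import all_boot.
From Stdlib Require Import Classical.
From mathcomp Require Import zify.
Set Implicit Arguments. Unset Strict Implicit. Unset Printing Implicit Defensive.


Lemma block_spec (W : finType) (s : seq {set W}) :
 (forall i j, i < size s -> j < size s -> i != j -> nth set0 s i :&: nth set0 s j = set0) ->
 \bigcup_(B <- s) B = setT ->
 forall w, block_index s w < size s /\
   (forall i, i < size s -> (w \in nth set0 s i) = (block_index s w == i)).
Proof.
move=> Hd Hc w.
have Hh : has (fun B : {set W} => w \in B) s.
  have : w \in [set: W] by rewrite inE.
  rewrite -Hc bigcup_seq => /bigcupP [B Bs wB]; apply/hasP; by exists B.
have Hlt : block_index s w < size s by rewrite /block_index -has_find.
split=> // i Hi; apply/idP/eqP => [wi|<-]; last by apply: (nth_find set0 Hh).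
have Hf := nth_find set0 Hh.
case: (ltngtP (block_index s w) i) => // H.
- have := Hd _ _ Hlt Hi (negbT (ltn_eqF H)).
  move/setP => /(_ w); by rewrite inE Hf wi inE.
- by have := before_find set0 H; rewrite wi.
Qed.

Lemma nth_block (W : finType) (G : brel W) s i : backbone G s -> i < size s ->
  nth set0 s i = [set w | block_index s w == i].
Proof.
case=> _ Hd Hc _ _ Hi; apply/setP=> w; rewrite inE.
by have [_ ->] := block_spec Hd Hc w.
Qed.

Lemma idx_lt (W : finType) (G : brel W) s w : backbone G s -> block_index s w < size s.
Proof. by case=> _ Hd Hc _ _; have [] := block_spec Hd Hc w. Qed.

Lemma L1 (W : finType) (G : brel W) s k : belief_algebra G -> backbone G s -> k < size s ->
  G [set w | block_index s w == k] [set w | k < block_index s w].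
Proof.
move=> [A0 A1 A2 A3 A4] Hb Hk.
set idx := block_index s.
have Hlt : forall w, idx w < size s by move=> w; apply: (idx_lt w Hb).
suff H : forall m, k + m < size s -> G [set w | idx w == k] [set w | k < idx w <= k + m].
  have := H (size s - 1 - k) ltac:(lia).
  congr G; apply/setP=> w; rewrite !inE; have := Hlt w; lia.
elim=> [|m IH] Hm.
  have -> : [set w | k < idx w <= k + 0] = set0 by apply/setP=> w; rewrite !inE; lia.
  apply/A1; have [Hne _ _ _ _] := Hb; have := Hne _ Hk; by rewrite (nth_block Hb Hk).
have IH' := IH ltac:(lia).
have Hc : G [set w | idx w == k + m] [set w | idx w == k + m.+1].
  have [_ _ _ Hcons _] := Hb; have := Hcons (k+m) ltac:(lia).
  by rewrite (nth_block Hb (_ : k + m < size s)) ?(nth_block Hb (_ : (k + m).+1 < size s)) ?addnS //; lia.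
have h1 : G [set w | (idx w == k) || (idx w == k + m.+1)] [set w | k < idx w <= k + m].
  apply: (A3 _ _ _ _ _ IH'); first (by apply/subsetP=> w; rewrite !inE => ->); first by [].
  apply/setP=> w; rewrite !inE; lia.
have h2 : G [set w | k <= idx w <= k + m] [set w | idx w == k + m.+1].
  apply: (A3 _ _ _ _ _ Hc); first (by apply/subsetP=> w; rewrite !inE; lia); first by [].
  apply/setP=> w; rewrite !inE; lia.
have := A4 _ _ _ _ _ h1 h2.
have -> : [set w | (idx w == k) || (idx w == k + m.+1)] :&: [set w | k <= idx w <= k + m]
   = [set w | idx w == k] by apply/setP=> w; rewrite !inE; lia.
have -> : [set w | k < idx w <= k + m] :|: [set w | idx w == k + m.+1]
   = [set w | k < idx w <= k + m.+1] by apply/setP=> w; rewrite !inE; lia.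
apply.
apply/setP=> w; rewrite !inE; lia.
Qed.

Lemma L2 (W : finType) (G : brel W) s U V : belief_algebra G -> backbone G s -> G U V ->
  U :&: V = set0 /\ exists2 w, w \in U & forall w2, w2 \in V -> block_index s w < block_index s w2.
Proof.
move=> HG Hb HUV; have [A0 A1 A2 A3 A4] := HG.
have HD := A0 _ _ HUV; split=> //.
set idx := block_index s.
have HDm : forall x, x \in U -> x \in V -> False.
  by move=> x xU xV; move/setP: HD => /(_ x); rewrite !inE xU xV.
case: (set_0Vmem V) => [V0|[v0 v0V]].
  move: HUV; rewrite V0 => /A1/set0Pn [w wU]; exists w => // w2; by rewrite inE.
case: (@arg_minnP W v0 (fun x => x \in V) idx v0V) => w' w'V Hmin.
apply: NNPP => Hno.
have HU : forall w, w \in U -> idx w' <= idx w.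
  move=> w wU; rewrite leqNgt; apply/negP=> Hw; apply: Hno; exists w => // w2 w2V.
  exact: (leq_trans Hw (Hmin _ w2V)).
set j := idx w'.
have Hj : j < size s by apply: (idx_lt _ Hb).
have h1 : G ([set w | j <= idx w] :\ w') [set w'].
  apply: (A3 _ _ _ _ _ HUV).
  - apply/subsetP=> w wU; rewrite !inE; apply/andP; split; last exact: HU.
    by apply/eqP=> E; subst w; exact: HDm wU w'V.
  - by apply/subsetP=> w; rewrite inE => /eqP ->.
  - apply/setP=> w; rewrite !inE; by case: (w == w'); rewrite ?andbF.
have h2 : G [set w | idx w == j] [set w | j < idx w] := L1 HG Hb Hj.
have Hu : [set w | j <= idx w] :\ w' :|: [set w'] = [set w | idx w == j] :|: [set w | j < idx w].
  apply/setP=> w; rewrite !inE; case: eqP => [->|_] /=; rewrite ?eqxx; lia.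
have := A4 _ _ _ _ Hu h1 h2.
have -> : ([set w | j <= idx w] :\ w') :&: [set w | idx w == j] = [set w | idx w == j] :\ w'.
  by apply/setP=> w; rewrite !inE; case: (w == w'); rewrite //=; lia.
move=> h3.
case: (set_0Vmem ([set w | idx w == j] :\ w')) => [E|[x xin]].
- have Eb : forall w, idx w == j -> w = w'.
    move=> w Hw; apply/eqP; apply: negbNE; apply/negP=> Hn.
    by move/setP: E => /(_ w); rewrite !inE Hn Hw.
  have E1 : [set w | j <= idx w] :\ w' = [set w | j < idx w].
    apply/setP=> w; rewrite !inE; case: eqP => [->|Hn] /=; first by rewrite /j ltnn.
    case: (ltngtP j (idx w)) => //= Heq. by exfalso; apply: Hn; apply: Eb; rewrite Heq.
  have E2 : [set w | idx w == j] = [set w'].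
    apply/setP=> w; rewrite !inE; apply/idP/eqP=> [/Eb //|->]; by rewrite /j.
  move: h1; rewrite E1 -E2 => h1.
  exact: (A2 _ _ h2 h1).
- have h4 : G ([set w | idx w == j] :\ w') [set w'].
    apply: (A3 _ _ _ _ _ h3) => //.
    + by apply/subsetP=> w; rewrite !inE => ->.
    + by apply/setP=> w; rewrite !inE; case: (w == w'); rewrite ?andbF.
  have [_ _ _ _ Hinc] := Hb.
  have [] := Hinc j ([set w | idx w == j] :\ w') [set w'] Hj.
  + by rewrite (nth_block Hb Hj); apply/subsetP=> w; rewrite !inE => /andP [].
  + by rewrite (nth_block Hb Hj); apply/subsetP=> w; rewrite !inE => /eqP ->.
  + by apply/setP=> w; rewrite !inE; case: (w == w'); rewrite ?andbF.
  + by apply/set0Pn; exists x.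
  + by apply/set0Pn; exists w'; rewrite inE.
  + by [].
Qed.

Lemma L3a (W : finType) (G : brel W) s s' : belief_algebra G -> backbone G s -> backbone G s' ->
  forall w, block_index s' w <= block_index s w.
Proof.
move=> HG Hb Hb'.
suff H : forall c w, block_index s' w = c -> c <= block_index s w by move=> w; exact: H.
elim=> [//|c IH] w Hw.
have Hc : c < size s' by have := idx_lt w Hb'; lia.
have [_ [v]] := L2 HG Hb (L1 HG Hb' Hc).
rewrite inE => /eqP /IH Hv /(_ w); rewrite inE Hw => /(_ (ltnSn c)); lia.
Qed.

Lemma L3 (W : finType) (G : brel W) s s' : belief_algebra G -> backbone G s -> backbone G s' ->
  forall w, block_index s w = block_index s' w.
Proof.
move=> HG Hb Hb' w; apply/eqP; rewrite eqn_leq (L3a HG Hb Hb') (L3a HG Hb' Hb) //.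
Qed.

Definition CB (W : finType) (s : seq {set W}) : brel W := ba_of_preorder (backbone_preorder s).

Lemma CBE (W : finType) (s : seq {set W}) U V : CB s U V <->
  U :&: V = set0 /\ exists2 w, w \in U & forall w2, w2 \in V -> block_index s w < block_index s w2.
Proof.
rewrite /CB /ba_of_preorder /strict_of /backbone_preorder.
split=> [[D [w wU H]]|[D [w wU H]]]; split=> //; exists w => // w2 /H.
- by case=> h1 /negP; rewrite -ltnNge.
- by move=> h; split; [exact: ltnW| apply/negP; rewrite -ltnNge].
Qed.

Lemma brel_eq_ba (W : finType) (G H : brel W) : brel_eq G H -> belief_algebra G -> belief_algebra H.
Proof.
move=> E [A0 A1 A2 A3 A4]; split.
- by move=> U V /E /A0.
- by move=> U; rewrite -E.
- by move=> U V /E h /E; apply: A2.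
- by move=> U V U1 V1 h1 /E h2 h3 h4; apply/E; apply: A3 h2 h3 h4.
- by move=> U1 V1 U2 V2 h /E h1 /E h2; apply/E; apply: A4.
Qed.

Lemma brel_eq_bb (W : finType) (G H : brel W) s : brel_eq G H -> backbone G s -> backbone H s.
Proof.
move=> E [B1 B2 B3 B4 B5]; split=> //.
- by move=> i Hi; apply/E; apply: B4.
- move=> i V1 V2 h1 h2 h3 h4 h5 h6; have [] := B5 i V1 V2 h1 h2 h3 h4 h5 h6.
  by move=> n1 n2; split=> /E.
Qed.

Lemma CB_ba (W : finType) (G : brel W) s : backbone G s -> belief_algebra (CB s) /\ backbone (CB s) s.
Proof.
move=> Hb.
have Hm : forall i, i < size s -> forall w, (w \in nth set0 s i) = (block_index s w == i).
  by move=> i Hi w; rewrite (nth_block Hb Hi) inE.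
split; first split.
- by move=> U V /CBE [].
- move=> U; rewrite CBE; split=> [[_ [w wU _]]|/set0Pn [w wU]]; first by apply/set0Pn; exists w.
  by split; [rewrite setI0 | exists w => // w2; rewrite inE].
- move=> U V /CBE [_ [w wU Hw]] /CBE [_ [v vV Hv]].
  have := Hw _ vV; have := Hv _ wU; lia.
- move=> U V U1 V1 h1 /CBE [_ [w wU Hw]] h2 h3; apply/CBE; split=> //.
  exists w; first exact: (subsetP h1).
  by move=> w2 /(subsetP h2); apply: Hw.
- move=> U1 V1 U2 V2 E /CBE [D1 [w1 w1U H1]] /CBE [D2 [w2 w2U H2]]; apply/CBE; split.
    apply/setP=> x; move/setP: D1 => /(_ x); move/setP: D2 => /(_ x); rewrite !inE.
    by case: (x \in U1); case: (x \in U2); case: (x \in V1); case: (x \in V2).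
  have inU : forall x, x \in U1 :|: V1 -> x \in U2 :|: V2 by move=> x; rewrite E.
  case: (leqP (block_index s w1) (block_index s w2)) => Hle.
  + have w1U2 : w1 \in U2.
      have := inU w1; rewrite !inE w1U /= => /(_ isT) /orP [//|/H2 h]; exfalso; lia.
    exists w1; first by rewrite inE w1U w1U2.
    move=> x; rewrite inE => /orP [/H1 //|/H2]; lia.
  + have w2U1 : w2 \in U1.
      have : w2 \in U1 :|: V1 by rewrite E inE w2U.
      rewrite inE => /orP [//|/H1 h]; exfalso; lia.
    exists w2; first by rewrite inE w2U w2U1.
    move=> x; rewrite inE => /orP [/H1|/H2 //]; lia.
- have [B1 B2 B3 B4 B5] := Hb; split=> //.
  + move=> i Hi; apply/CBE; split; first by apply: B2 => //; lia.
    have /set0Pn [w wi] := B1 i (ltnW Hi).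
    exists w => // w2; rewrite (Hm i.+1) // (Hm i) ?(ltnW Hi) // in wi *.
    by move=> /eqP ->; move/eqP: wi => ->.
  + move=> i V1 V2 Hi S1 S2 D N1 N2.
    have /set0Pn [x1 x1V] := N1; have /set0Pn [x2 x2V] := N2.
    have e1 : block_index s x1 = i by apply/eqP; rewrite -Hm // (subsetP S1).
    have e2 : block_index s x2 = i by apply/eqP; rewrite -Hm // (subsetP S2).
    split=> /CBE [_ [w wV Hw]].
    * have e : block_index s w = i by apply/eqP; rewrite -Hm // (subsetP S1).
      have := Hw _ x2V; lia.
    * have e : block_index s w = i by apply/eqP; rewrite -Hm // (subsetP S2).
      have := Hw _ x1V; lia.
Qed.

Lemma G_sub_CB (W : finType) (G : brel W) s : belief_algebra G -> backbone G s -> brel_sub G (CB s).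
Proof. by move=> HG Hb U V /(L2 HG Hb) H; apply/CBE. Qed.

Lemma Com_eq (W : finType) (G : brel W) s : belief_algebra G -> backbone G s -> brel_eq (Com G) (CB s).
Proof.
move=> HG Hb U V; split.
- case=> s' Hb' /(CBE s') [D [w wU H]]; apply/CBE; split=> //; exists w => // w2.
  rewrite !(L3 HG Hb Hb'); exact: H.
- by move=> h; exists s.
Qed.

Lemma card_D_lt (W : finType) (B C : {set W}) : C \subset B -> C != set0 -> #|B :\: C| < #|B|.
Proof.
move=> CB Cn; rewrite cardsD (setIidPr CB).
have := subset_leq_card CB; rewrite -card_gt0 in Cn; lia.
Qed.

Lemma min_card (W : finType) (P : {set W} -> Prop) X : P X ->
  exists U, P U /\ forall X', P X' -> #|U| <= #|X'|.
Proof.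
suff H : forall n X, P X -> #|X| <= n -> exists U, P U /\ forall X', P X' -> #|U| <= #|X'|.
  by move=> PX; exact: (H _ X PX (leqnn _)).
elim=> [|n IH] X0 PX Hn.
  by exists X0; split=> // X' _; have -> : #|X0| = 0 by lia.
case: (classic (exists X', P X' /\ #|X'| < #|X0|)) => [[X' [PX' Hl]]|Hno].
  by apply: (IH X') => //; lia.
exists X0; split=> // X' PX'; rewrite leqNgt; apply/negP=> Hl; apply: Hno; by exists X'.
Qed.

Lemma nth_sub_big (W : finType) (s : seq {set W}) j : j < size s ->
  nth set0 s j \subset \bigcup_(B <- s) B.
Proof.
move=> Hj; rewrite bigcup_seq; apply: (bigcup_sup (nth set0 s j)); exact: mem_nth.
Qed.

Ltac bcase := repeat (match goal with |- context [(?x \in ?A)] => case: (x \in A) end);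
  rewrite /=; try done; repeat (let h := fresh in move=> h; try (have := h isT; done)).

Definition Pbb (W : finType) (G : brel W) (Y : {set W}) (s : seq {set W}) : Prop :=
  [/\ (forall i, i < size s -> nth set0 s i != set0),
      (forall i j, i < size s -> j < size s -> i != j ->
          nth set0 s i :&: nth set0 s j = set0),
      \bigcup_(B <- s) B = Y,
      (forall i, i.+1 < size s -> G (nth set0 s i) (nth set0 s i.+1)) &
      (forall i (V1 V2 : {set W}), i < size s -> V1 \subset nth set0 s i ->
          V2 \subset nth set0 s i -> V1 :&: V2 = set0 -> V1 != set0 ->
          V2 != set0 -> ~ G V1 V2 /\ ~ G V2 V1)].

Lemma incomp_min (W : finType) (G : brel W) (Y U V1 V2 : {set W}) : belief_algebra G ->
  U \subset Y -> G U (Y :\: U) ->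
  (forall X : {set W}, X \subset Y -> G X (Y :\: X) -> #|U| <= #|X|) ->
  V1 \subset U -> V2 \subset U -> V1 :&: V2 = set0 -> V2 != set0 -> ~ G V1 V2.
Proof.
move=> [A0 A1 A2 A3 A4] UY HU Hmin S1 S2 D N2 H.
have S2Y : V2 \subset Y by apply: subset_trans S2 UY.
have h1 : G (Y :\: V2) V2.
  apply: (A3 _ _ _ _ _ H) => //.
  - apply/subsetP=> x xV1; rewrite inE (subsetP UY _ (subsetP S1 _ xV1)) andbT.
    apply/negP=> xV2; move/setP: D => /(_ x); by rewrite !inE xV1 xV2.
  - by apply/setP=> x; rewrite !inE; case: (x \in V2); rewrite ?andbF.
have Hu : (Y :\: V2) :|: V2 = U :|: (Y :\: U).
  apply/setP=> x; rewrite !inE.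
  have := subsetP S2Y x; have := subsetP UY x.
  bcase.
have := A4 _ _ _ _ Hu h1 HU.
have -> : (Y :\: V2) :&: U = U :\: V2.
  apply/setP=> x; rewrite !inE; have := subsetP UY x.
  bcase.
have -> : V2 :|: (Y :\: U) = Y :\: (U :\: V2).
  apply/setP=> x; rewrite !inE; have := subsetP S2Y x; have := subsetP S2 x.
  bcase.
move=> h.
have := Hmin (U :\: V2) (subset_trans (subsetDl U V2) UY) h.
have := card_D_lt S2 N2; lia.
Qed.

Lemma exists_Pbb (W : finType) (G : brel W) : belief_algebra G ->
  forall n (Y : {set W}), #|Y| <= n -> exists s, Pbb G Y s.
Proof.
move=> HG; have [A0 A1 A2 A3 A4] := HG.
elim=> [|n IH] Y HY.
  exists [::]; split=> //; rewrite big_nil; apply/eqP; rewrite eq_sym -cards_eq0; lia.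
case: (set_0Vmem Y) => [->|[y yY]].
  by exists [::]; split=> //; rewrite big_nil.
have HYn : Y != set0 by apply/set0Pn; exists y.
have HYY : G Y (Y :\: Y) by rewrite setDv; apply/A1.
have [U [[UY HU] Hmin]] := min_card (P := fun X : {set W} => X \subset Y /\ G X (Y :\: X))
   (conj (subxx Y) HYY).
have Hmin' : forall X : {set W}, X \subset Y -> G X (Y :\: X) -> #|U| <= #|X|.
  by move=> X h1 h2; apply: Hmin.
have Un : U != set0.
  apply/negP=> /eqP E; move: HU; rewrite E setD0 => h; exact: (A2 _ _ (proj2 (A1 Y) HYn) h).
have [s' [B1 B2 B3 B4 B5]] := IH (Y :\: U) ltac:(have := card_D_lt UY Un; lia).
have Hsub : forall j, j < size s' -> nth set0 s' j \subset Y :\: U.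
  by move=> j Hj; rewrite -B3; apply: nth_sub_big.
have HdisU : forall j, j < size s' -> U :&: nth set0 s' j = set0.
  move=> j Hj; apply/setP=> x; rewrite !inE; have := subsetP (Hsub j Hj) x; rewrite !inE.
  by case: (x \in U); case: (x \in nth set0 s' j); rewrite //= => /(_ isT).
exists (U :: s'); split.
- by case=> [|i] //= Hi; apply: B1.
- case=> [|i] [|j] //= Hi Hj Hij.
  + exact: HdisU.
  + by rewrite setIC; apply: HdisU.
  + by apply: B2.
- rewrite big_cons B3; apply/setP=> x; rewrite !inE; have := subsetP UY x; bcase.
- case=> [|i] /= Hi; last by apply: B4.
  apply: (A3 _ _ _ _ (subxx U) HU); [exact: Hsub | exact: HdisU].
- case=> [|i] /= V1 V2 Hi; last by apply: B5.
  move=> S1 S2 D N1 N2; split.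
  + exact: (incomp_min HG UY HU Hmin' S1 S2 D N2).
  + by apply: (incomp_min HG UY HU Hmin' S2 S1) => //; rewrite setIC.
Qed.

Lemma exists_bb (W : finType) (G : brel W) : belief_algebra G -> exists s, backbone G s.
Proof.
move=> HG; have [s [B1 B2 B3 B4 B5]] := exists_Pbb HG (leqnn #|[set: W]|).
by exists s; split.
Qed.

Lemma Com_props (W : finType) (G : brel W) : belief_algebra G ->
  belief_algebra (Com G) /\ ba_le G (Com G).
Proof.
move=> HG; have [s Hb] := exists_bb HG.
have E := Com_eq HG Hb.
have E' : brel_eq (CB s) (Com G) by move=> U V; split=> /E.
have [HC HbC] := CB_ba Hb.
split; first exact: brel_eq_ba E' HC.
split; first by exists s; split=> //; apply: brel_eq_bb E' HbC.
by move=> U V /(G_sub_CB HG Hb) /E'.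
Qed.

Lemma ba_gen_closed (W : finType) (H : brel W) : belief_algebra H ->
  brel_sub H (RW (W:=W)) /\ gen_closed H.
Proof.
move=> [A0 A1 A2 A3 A4]; split; first by move=> U V /A0.
split.
- by move=> U /A1.
- by move=> U V U1 V1 h1 h2 h3 h4; apply: (A3 _ _ _ _ h2 h1 h3 h4).
- exact: A4.
Qed.

Theorem theorem5 (W : finType) (op : brel W -> brel W -> brel W) :
  0 < #|W| ->
  RA0 op -> RA1 op -> RA2 op -> RA3 op -> RA4 op -> RA5 op -> RA6 op ->
  forall G1 G2 : brel W, belief_algebra G1 -> belief_algebra G2 ->
    brel_eq (op G1 G2)
      (Gen (brel_inter (brel_union G1 G2) (op (Com G1) (Com G2)))).
Proof.
move=> _ R0 _ R2 _ _ R5 R6 G1 G2 HG1 HG2.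
have [HC1 Hle1] := Com_props HG1.
have [HC2 Hle2] := Com_props HG2.
have Hsub := R5 _ _ _ _ HG1 HG2 HC1 HC2 Hle1 Hle2.
have HH := R0 _ _ HC1 HC2.
have [HRW Hcl] := ba_gen_closed HH.
have [Om [HOm EOm]] := R2 _ _ HG1 HG2.
apply: R6 => //.
- by move=> U V [].
- move=> U V HG; apply: HG => //; by move=> X Y [].
- move=> U V /EOm HG S SRW OS Scl; apply: HG => // X Y XY; apply: OS; split; first exact: HOm.
  apply: Hsub; apply/EOm => S' _ OS' _; exact: OS'.
Qed.
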